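(* Let $(r_k)_{k\ge1}$ be a sequence of real numbers such that for every $\epsilon>0$ there exists $K=K(\epsilon)\in\mathbb{N}$ with the following property: whenever $k_1,\dots,k_n\in\mathbb{N}$ satisfy $k_1,\dots,k_n\ge K$ and $k=k_1+\dots+k_n$, we have $r_k\le r_{k_1}+\dots+r_{k_n}+k\epsilon$. Then $\lim_{k\to\infty}r_k/k$ exists. *)

(* Defs.v *)
From HB Require Import structures.
From mathcomp Require Import all_boot all_order all_algebra.
From mathcomp Require Import all_classical all_reals.
From mathcomp Require Import all_analysis.

(* Main.v *)
From HB Require Import structures.
From mathcomp Require Import all_boot all_order all_algebra.
From mathcomp Require Import all_classical all_reals.
From mathcomp Require Import all_analysis.
From mathcomp Require Import ring lra zify.
Import Order.TTheory GRing.Theory Num.Theory.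
Local Open Scope classical_set_scope.
Local Open Scope ring_scope.

Lemma sum_nseq_r (R : realType) (r : nat -> R) n a :
  \sum_(i <- nseq n a) r i = r a *+ n.
Proof. by elim: n => [|n IH]; rewrite ?big_nil // big_cons IH mulrS. Qed.

Lemma keyB (R : realType) (r : nat -> R) (eps : R) (K m : nat) :
  0 < eps ->
  (forall s : seq nat, s != [::] -> all (fun k => (0 < k)%N && (K <= k)%N) s ->
       r (sumn s) <= \sum_(k <- s) r k + (sumn s)%:R * eps) ->
  (K <= m)%N -> (0 < m)%N ->
  exists N, forall k, (N <= k)%N -> r k / k%:R <= r m / m%:R + 2 * eps.
Proof.
move=> e0 H Km m0.
set D := \sum_(j < m) `|m%:R * r (m + j)%N - (m + j)%:R * r m|.
have D0 : 0 <= D by apply: sumr_ge0 => j _.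
have mR0 : 0 < m%:R :> R by rewrite ltr0n.
have me0 : 0 < m%:R * eps by rewrite mulr_gt0.
exists (maxn (2 * m) (Num.bound (D / (m%:R * eps)))) => k.
rewrite geq_max => /andP[k2m kb].
have k0 : (0 < k)%N by apply: leq_trans k2m; rewrite muln_gt0 m0.
have kR0 : 0 < k%:R :> R by rewrite ltr0n.
set q := (k %/ m)%N; set t := (k %% m)%N.
have kqt : k = (q * m + t)%N by rewrite /q /t -divn_eq.
have q2 : (2 <= q)%N by rewrite /q leq_divRL.
have tm : (t < m)%N by rewrite /t ltn_mod.
have Hs := H ((m + t)%N :: nseq q.-1 m) isT.
have sk : sumn ((m + t)%N :: nseq q.-1 m) = k.
  rewrite /= sumn_nseq [in RHS]kqt; move: q2; case: (q) => [|[|q']] //= _; rewrite mulnS; lia.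
rewrite sk big_cons sum_nseq_r in Hs.
have Hall : all (fun k => (0 < k)%N && (K <= k)%N) ((m + t)%N :: nseq q.-1 m).
  rewrite /= all_nseq m0 Km !orbT /= andbT; apply/andP; split.
    by rewrite addn_gt0 m0.
  by rewrite (leq_trans Km) ?leq_addr.
have {}Hs := Hs Hall.
have Dt : `|m%:R * r (m + t)%N - (m + t)%:R * r m| <= D.
  rewrite /D (bigD1 (Ordinal tm)) //= lerDl; exact: sumr_ge0.
have Dk : D < k%:R * (m%:R * eps).
  rewrite -ltr_pdivrMr //; apply: (lt_le_trans (archi_boundP _)).
    by rewrite divr_ge0 // ltW.
  by rewrite ler_nat.
have E1 : m%:R * r (m + t)%N - (m + t)%:R * r m <= k%:R * (m%:R * eps).
  exact: le_trans (ler_norm _) (le_trans Dt (ltW Dk)).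
set a := r m / m%:R.
have ra : r m = a * m%:R by rewrite /a divfK // gt_eqF.
rewrite ler_pdivrMr //.
have E2 : r (m + t)%N <= (m + t)%:R * a + k%:R * eps.
  rewrite -(ler_pM2l mR0) mulrDr; move: E1; rewrite ra.
  set X := r (m + t)%N; lra.
have E3 : r m *+ q.-1 = (q%:R - 1) * (a * m%:R).
  rewrite -subn1 -[r m *+ _]mulr_natl natrB ?(leq_trans _ q2) //; congr (_ * _); exact: ra.
have E4 : k%:R = q%:R * m%:R + t%:R :> R by rewrite kqt natrD natrM.
rewrite E3 in Hs; rewrite natrD in E2.
have E5 : (m%:R + t%:R) * a + (q%:R - 1) * (a * m%:R) = a * k%:R :> R.
  by rewrite E4; ring.
move: Hs E2 E5; set X := r (m + t)%N; set Y := r k; lra.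
Qed.

Lemma le_er (R : realType) (a b : \bar R) :
  (forall y : R, (a < y%:E)%E -> (b <= y%:E)%E) -> (b <= a)%E.
Proof.
case: a => [a| |] H.
- apply/lee_addgt0Pr => e e0; apply: H; rewrite lte_fin ltrDl //.
- exact: leey.
- case: b H => [b| |] H //.
  + exfalso; have := H (b - 1)%R (ltNyr _); rewrite lee_fin; lra.
  + by have := H 0%R (ltNyr _).
Qed.

Theorem lemma2p9 (R : realType) (r : nat -> R) :
  (forall eps : R, 0 < eps ->
     exists K : nat, forall s : seq nat,
       s != [::] ->
       all (fun k => (0 < k)%N && (K <= k)%N) s ->
       r (sumn s) <= \sum_(k <- s) r k + (sumn s)%:R * eps) ->
  exists l : \bar R,
    (fun k : nat => (r k / k%:R)%:E) @ \oo --> l.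
Proof.
move=> H.
set u := fun k : nat => (r k / k%:R)%:E.
set S := ereal_inf (range (esups u)).
set I := ereal_sup (range (einfs u)).
exists I.
have eI n : (einfs u n <= I)%E by apply: ereal_sup_ubound; exists n.
have uin n : (einfs u n <= u n)%E by apply: ereal_inf_lbound; exists n => /=.
have usup n : (u n <= esups u n)%E by apply: ereal_sup_ubound; exists n => /=.
have A (y : R) : (I < y%:E)%E -> forall n, exists m, (n <= m)%N /\ (u m < y%:E)%E.
  move=> Iy n; move: (le_lt_trans (eI n) Iy) => /ereal_inf_lt [_ [m nm <-] lt].
  by exists m.
have C (c : \bar R) : (exists N, forall k, (N <= k)%N -> (u k <= c)%E) -> (S <= c)%E.
  move=> [N HN]; apply: (@le_trans _ _ (esups u N)).
    by apply: ereal_inf_lbound; exists N.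
  by apply: ge_ereal_sup => _ [k Nk <-]; apply: HN.
have SI : (S <= I)%E.
  apply: le_er => y Iy; apply/lee_addgt0Pr => e e0.
  have e2 : 0 < e / 2 by rewrite divr_gt0.
  have [K HK] := H (e / 2) e2.
  have [m [Km um]] := A y Iy K.+1.
  have [N HN] := @keyB _ r _ K m e2 HK (ltnW Km) (leq_trans (ltn0Sn K) Km).
  apply: C; exists N => k Nk; rewrite /u lee_fin; apply: le_trans (HN k Nk) _.
  move: um; rewrite lte_fin; lra.
have IS : (I <= S)%E.
  apply: ge_ereal_sup => _ [n _ <-]; apply: le_ereal_inf_tmp => _ [m _ <-].
  apply: (@le_trans _ _ (einfs u (maxn n m))).
    by apply: nondecreasing_einfs; rewrite leq_maxl.
  apply: le_trans (einfs_le_esups _ _) _.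
  by apply: nonincreasing_esups; rewrite leq_maxr.
have SeI : S = I by apply/eqP; rewrite eq_le SI IS.
apply: (@squeeze_cvge _ _ _ _ (einfs u) u (esups u)).
- by apply: nearW => n; rewrite uin usup.
- exact: cvg_einfs_sup.
- rewrite -SeI; exact: cvg_esups_inf.
Qed.
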